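(* Let $\phi:\Gamma\to\Gamma'$ be a chromatic morphism between adequate graphs, and assume that $\Gamma'$ is connected. Then $\phi$ is a covering map.
   Context: Fix $r\geq1$ and a type $((p_i,q_i))_{i=1}^r\in(\mathbb{N}^2)^r$. A graph $\Gamma=(V,E)$ consists of sets $V,E$ and maps $s,t:E\to V$ (loops and multiple edges allowed), identified with its topological realization. A morphism of graphs $\Gamma\to\Gamma'$ is a pair of maps $V\to V'$, $E\to E'$ compatible with $s$ and $t$; it is a covering if it is surjective and a local homeomorphism. An adequate graph is a graph with colorings $c:V\to\{1,\dots,r\}$, $c_o,c_i:E\to\mathbb{N}$ such that whenever $c(v)=a$, the edges $e$ with $s(e)=v$ are exactly $p_a$ in number with $\{c_o(e)\}=\{1,\dots,p_a\}$, and the edges $e$ with $t(e)=v$ are exactly $q_a$ in number with $\{c_i(e)\}=\{1,\dots,q_a\}$. A morphism of adequate graphs is chromatic if it preserves $c$, $c_o$ and $c_i$. *)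

(* Defs.v *)
From Stdlib Require Import Arith Relations.

Record graph := Graph {
  gV : Type;
  gE : Type;
  gs : gE -> gV;
  gt : gE -> gV
}.

(* A type ((p_i,q_i))_{i=1}^r, given by r and the functions p, q
   (only the values on 1..r matter). *)
Record gtype := GType {
  ty_r : nat;
  ty_p : nat -> nat;
  ty_q : nat -> nat
}.

Record adequate_graph (T : gtype) := AdequateGraph {
  ag : graph;
  col : gV ag -> nat;
  col_o : gE ag -> nat;
  col_i : gE ag -> nat;
  col_range : forall v, 1 <= col v <= ty_r T;
  (* edges out of v: exactly p_{c v} of them, with c_o-values {1,..,p_{c v}} *)
  out_range : forall v e, gs ag e = v -> 1 <= col_o e <= ty_p T (col v);
  out_onto : forall v k, 1 <= k <= ty_p T (col v) ->
               exists e, gs ag e = v /\ col_o e = k;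
  out_inj : forall v e e', gs ag e = v -> gs ag e' = v ->
               col_o e = col_o e' -> e = e';
  (* edges into v: exactly q_{c v} of them, with c_i-values {1,..,q_{c v}} *)
  in_range : forall v e, gt ag e = v -> 1 <= col_i e <= ty_q T (col v);
  in_onto : forall v k, 1 <= k <= ty_q T (col v) ->
               exists e, gt ag e = v /\ col_i e = k;
  in_inj : forall v e e', gt ag e = v -> gt ag e' = v ->
               col_i e = col_i e' -> e = e'
}.
Arguments ag {T}.
Arguments col {T}.
Arguments col_o {T}.
Arguments col_i {T}.

Record graph_morphism (G H : graph) := GraphMorphism {
  mV : gV G -> gV H;
  mE : gE G -> gE H;
  m_s : forall e, gs H (mE e) = mV (gs G e);
  m_t : forall e, gt H (mE e) = mV (gt G e)
}.
Arguments mV {G H}.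
Arguments mE {G H}.

Definition chromatic {T} (G H : adequate_graph T)
    (f : graph_morphism (ag G) (ag H)) : Prop :=
  (forall v, col H (mV f v) = col G v) /\
  (forall e, col_o H (mE f e) = col_o G e) /\
  (forall e, col_i H (mE f e) = col_i G e).

Definition adjacent (G : graph) (v w : gV G) : Prop :=
  exists e, gs G e = v /\ gt G e = w.

(* The topological realization of G is connected iff any two vertices are
   joined by an unoriented edge path. *)
Definition connected (G : graph) : Prop :=
  forall v w : gV G, clos_refl_sym_trans (gV G) (adjacent G) v w.

Definition bijective_between {A B : Type} (PA : A -> Prop) (PB : B -> Prop)
    (f : A -> B) : Prop :=
  (forall a, PA a -> PB (f a)) /\
  (forall a a', PA a -> PA a' -> f a = f a' -> a = a') /\
  (forall b, PB b -> exists a, PA a /\ f a = b).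

(* Covering of graphs: surjective on the realization (i.e. on vertices and
   edges) and a local homeomorphism (i.e. for every vertex v, f induces a
   bijection from the half-edges at v onto the half-edges at f v; since f
   preserves sources and targets, this splits into bijections on outgoing
   and on incoming edges). *)
Definition covering {G H : graph} (f : graph_morphism G H) : Prop :=
  (forall w : gV H, exists v, mV f v = w) /\
  (forall e' : gE H, exists e, mE f e = e') /\
  (forall v : gV G,
     bijective_between (fun e => gs G e = v) (fun e' => gs H e' = mV f v) (mE f) /\
     bijective_between (fun e => gt G e = v) (fun e' => gt H e' = mV f v) (mE f)).

(* Main.v *)
Require Import Defs.
From Stdlib Require Import Arith Relations.

Theorem lemma3p6 (T : gtype) (G H : adequate_graph T)
    (f : graph_morphism (ag G) (ag H)) :
  1 <= ty_r T ->
  inhabited (gV (ag G)) ->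
  chromatic G H f ->
  connected (ag H) ->
  covering f.
Proof.
  intros _ [v0] [Hc [Ho Hi]] Hconn.
  assert (Lout : forall v, bijective_between (fun e => gs (ag G) e = v)
     (fun e' => gs (ag H) e' = mV f v) (mE f)).
  { intro v. split; [|split].
    - intros a Ha. rewrite m_s, Ha. reflexivity.
    - intros a a' Ha Ha' Heq. apply (out_inj T G v a a' Ha Ha').
      rewrite <- (Ho a), <- (Ho a'), Heq. reflexivity.
    - intros b Hb. pose proof (out_range T H _ b Hb) as R. rewrite Hc in R.
      destruct (out_onto T G v (col_o H b) R) as [e [He1 He2]].
      exists e. split; [exact He1|].
      apply (out_inj T H (mV f v)); auto.
      + rewrite m_s, He1. reflexivity.
      + rewrite Ho. exact He2. }
  assert (Lin : forall v, bijective_between (fun e => gt (ag G) e = v)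
     (fun e' => gt (ag H) e' = mV f v) (mE f)).
  { intro v. split; [|split].
    - intros a Ha. rewrite m_t, Ha. reflexivity.
    - intros a a' Ha Ha' Heq. apply (in_inj T G v a a' Ha Ha').
      rewrite <- (Hi a), <- (Hi a'), Heq. reflexivity.
    - intros b Hb. pose proof (in_range T H _ b Hb) as R. rewrite Hc in R.
      destruct (in_onto T G v (col_i H b) R) as [e [He1 He2]].
      exists e. split; [exact He1|].
      apply (in_inj T H (mV f v)); auto.
      + rewrite m_t, He1. reflexivity.
      + rewrite Hi. exact He2. }
  assert (SV : forall w, exists v, mV f v = w).
  { intro w.
    assert (K : forall x y, clos_refl_sym_trans _ (adjacent (ag H)) x y ->
      ((exists v, mV f v = x) <-> (exists v, mV f v = y))).
    { intros x y C. induction C as [x y [e' [E1 E2]]| | |]; try tauto.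
      split.
      - intros [v Hv]. destruct (Lout v) as [_ [_ S]].
        destruct (S e') as [e [Ee Me]]; [rewrite Hv; exact E1|].
        exists (gt (ag G) e). rewrite <- m_t, Me. exact E2.
      - intros [v Hv]. destruct (Lin v) as [_ [_ S]].
        destruct (S e') as [e [Ee Me]]; [rewrite Hv; exact E2|].
        exists (gs (ag G) e). rewrite <- m_s, Me. exact E1. }
    apply (K _ _ (Hconn (mV f v0) w)). exists v0; reflexivity. }
  split; [exact SV| split; [|intro v; split; auto]].
  intro e'. destruct (SV (gs (ag H) e')) as [v Hv].
  destruct (Lout v) as [_ [_ S]].
  destruct (S e') as [e [_ Me]]; [symmetry; exact Hv|]. eauto.
Qed.
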